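(* Let $s\in\{+1,-1\}$ and let $q\ge1$ be an integer. Let $f:\mathbb Z_{2q+1}\to\mathbb R$ be nonzero and even, with $sf(0)\le0$ and $\widehat f(0)\le0$. Then $$\#\{n\in\mathbb Z_{2q+1}: f(n)<0\}\cdot\#\{k\in\mathbb Z_{2q+1}: s\widehat f(k)<0\}\ \ge\ \frac{2q+1}{16}.$$
   Context: $\mathbb Z_{2q+1}$ is the group of integers modulo $2q+1$, with representatives $\{-q,\dots,q\}$. The discrete Fourier transform is $\widehat f(k)=\frac{1}{\sqrt{2q+1}}\sum_{n=-q}^qf(n)e^{-2\pi ikn/(2q+1)}$; for even real $f$ it is real and even. *)

(* Defs.v *)
From Stdlib Require Import Reals Lra Lia ZArith List.
Open Scope R_scope.

(* Representatives {-q,...,q} of Z_{2q+1}. *)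
Definition zrange (q : nat) : list Z :=
  map (fun i => (Z.of_nat i - Z.of_nat q)%Z) (seq 0 (2 * q + 1)).

Definition sumZ (q : nat) (g : Z -> R) : R :=
  fold_right (fun n acc => g n + acc) 0 (zrange q).

Definition Nmod (q : nat) : R := INR (2 * q + 1).

(* DFT  fhat(k) = 1/sqrt(2q+1) * sum_n f(n) e^{-2 pi i k n/(2q+1)},
   split into real and imaginary parts (f is real-valued). *)
Definition dft_re (q : nat) (f : Z -> R) (k : Z) : R :=
  / sqrt (Nmod q) * sumZ q (fun n => f n * cos (2 * PI * IZR k * IZR n / Nmod q)).

Definition dft_im (q : nat) (f : Z -> R) (k : Z) : R :=
  - (/ sqrt (Nmod q) * sumZ q (fun n => f n * sin (2 * PI * IZR k * IZR n / Nmod q))).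

Definition count_neg (q : nat) (g : Z -> R) : nat :=
  length (filter (fun n => if Rlt_dec (g n) 0 then true else false) (zrange q)).

Definition in_range (q : nat) (n : Z) : Prop :=
  (- Z.of_nat q <= n <= Z.of_nat q)%Z.

(* Main.v *)
Require Import Defs.
From Stdlib Require Import Reals ZArith List Lra Lia.
Open Scope R_scope.

Definition lsum (l : list Z) (g : Z -> R) : R := fold_right (fun n acc => g n + acc) 0 l.
Lemma lsum_cons a l g : lsum (a::l) g = g a + lsum l g. Proof. reflexivity. Qed.

Lemma lsum_ext l g h : (forall x, In x l -> g x = h x) -> lsum l g = lsum l h.
Proof. induction l as [|a l IH]; intros H; [reflexivity|]. rewrite !lsum_cons, H, IH; [reflexivity| |simpl; auto]. intros; apply H; simpl; auto. Qed.

Lemma lsum_plus l g h : lsum l (fun x => g x + h x) = lsum l g + lsum l h.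
Proof. induction l as [|a l IH]; [simpl; lra|]. rewrite !lsum_cons, IH; ring. Qed.

Lemma lsum_scal l c g : lsum l (fun x => c * g x) = c * lsum l g.
Proof. induction l as [|a l IH]; [simpl; lra|]. rewrite !lsum_cons, IH; ring. Qed.

Lemma lsum_le l g h : (forall x, In x l -> g x <= h x) -> lsum l g <= lsum l h.
Proof. induction l as [|a l IH]; intros H; [simpl; lra|]. rewrite !lsum_cons.
 assert (g a <= h a) by (apply H; simpl; auto). assert (lsum l g <= lsum l h) by (apply IH; intros; apply H; simpl; auto). lra. Qed.

Lemma lsum_abs l g : Rabs (lsum l g) <= lsum l (fun x => Rabs (g x)).
Proof. induction l as [|a l IH]; [simpl; rewrite Rabs_R0; lra|]. rewrite !lsum_cons.
 eapply Rle_trans; [apply Rabs_triang|]. lra. Qed.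

Lemma lsum_zero l g : (forall x, In x l -> g x = 0) -> lsum l g = 0.
Proof. induction l as [|a l IH]; intros H; [reflexivity|]. rewrite lsum_cons, H, IH; [ring| |simpl; auto]. intros; apply H; simpl; auto. Qed.

Lemma lsum_swap l1 l2 (F : Z -> Z -> R) :
  lsum l1 (fun a => lsum l2 (fun b => F a b)) = lsum l2 (fun b => lsum l1 (fun a => F a b)).
Proof. induction l1 as [|a l1 IH].
 - simpl. symmetry. apply lsum_zero. reflexivity.
 - rewrite lsum_cons, IH.
   transitivity (lsum l2 (fun b => F a b + lsum l1 (fun a0 => F a0 b))).
   + rewrite lsum_plus; reflexivity.
   + reflexivity. Qed.

Lemma lsum_delta l a g : NoDup l -> In a l -> (forall x, In x l -> x <> a -> g x = 0) -> lsum l g = g a.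
Proof. induction l as [|b l IH]; intros Hn Hi H; [destruct Hi|]. rewrite lsum_cons.
 inversion Hn; subst. destruct Hi as [->|Hi].
 - rewrite lsum_zero; [ring|]. intros x Hx. apply H; [simpl; auto|]. intros ->. tauto.
 - rewrite H; [|simpl; auto|intros ->; tauto]. rewrite IH; auto; [ring|]. intros; apply H; simpl; auto. Qed.

Lemma lsum_const1 l : lsum l (fun _ => 1) = INR (length l).
Proof. induction l as [|a l IH]; [reflexivity|]. rewrite lsum_cons, IH. simpl length. rewrite S_INR. ring. Qed.

Lemma lsum_ge l a g : In a l -> (forall x, In x l -> 0 <= g x) -> g a <= lsum l g.
Proof. induction l as [|b l IH]; intros Hi H; [destruct Hi|]. rewrite lsum_cons.
 assert (0 <= lsum l g). { rewrite <- (lsum_zero l (fun _ => 0)) by auto. apply lsum_le. intros; apply H; simpl; auto. }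
 destruct Hi as [->|Hi]. lra. assert (0 <= g b) by (apply H; simpl; auto).
 assert (g a <= lsum l g) by (apply IH; auto; intros; apply H; simpl; auto). lra. Qed.

Lemma lsum_neg l h B : (forall x, In x l -> Rabs (h x) <= B) ->
  lsum l (fun x => Rabs (h x)) <= lsum l h + 2 * INR (length (filter (fun n => if Rlt_dec (h n) 0 then true else false) l)) * B.
Proof. induction l as [|a l IH]; intros H; [simpl; lra|]. rewrite !lsum_cons.
 assert (Ha : Rabs (h a) <= B) by (apply H; simpl; auto).
 assert (IH' := IH (fun x Hx => H x (or_intror Hx))).
 simpl filter. destruct (Rlt_dec (h a) 0) as [Hl|Hl].
 - simpl length. rewrite S_INR. rewrite Rabs_left in * by auto. lra.
 - rewrite Rabs_right in * by lra. lra. Qed.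

Lemma cos_tele x y : 2 * sin (x/2) * cos y = sin (y + x/2) - sin (y - x/2).
Proof. rewrite sin_plus, sin_minus. ring. Qed.

Lemma seq_sum q x st m :
  lsum (map (fun i => (Z.of_nat i - Z.of_nat q)%Z) (seq st m)) (fun k => 2 * sin (x/2) * cos (IZR k * x))
  = sin ((INR (st+m) - INR q - /2) * x) - sin ((INR st - INR q - /2) * x).
Proof. revert st; induction m as [|m IH]; intros st.
 - rewrite Nat.add_0_r. simpl. ring.
 - simpl seq. simpl map. rewrite lsum_cons, IH, cos_tele.
   rewrite minus_IZR, <- !INR_IZR_INZ.
   replace (INR (S st + m)) with (INR (st + S m)) by (f_equal; lia).
   rewrite S_INR.
   replace ((INR st - INR q) * x + x / 2) with ((INR st + 1 - INR q - / 2) * x) by field.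
   replace ((INR st - INR q) * x - x / 2) with ((INR st - INR q - / 2) * x) by field.
   ring. Qed.

Lemma zrange_len q : length (zrange q) = (2*q+1)%nat.
Proof. unfold zrange. rewrite length_map, length_seq. reflexivity. Qed.

Lemma in_zrange q n : In n (zrange q) <-> in_range q n.
Proof. unfold zrange, in_range. rewrite in_map_iff. split.
 - intros [i [<- Hi]]. apply in_seq in Hi. lia.
 - intros H. exists (Z.to_nat (n + Z.of_nat q)). split; [lia|]. apply in_seq. lia. Qed.

Lemma zrange_nodup q : NoDup (zrange q).
Proof. unfold zrange. apply NoDup_map_NoDup_ForallPairs; [|apply seq_NoDup].
 intros a b _ _ H. lia. Qed.

Lemma Nmod_pos q : 0 < Nmod q.
Proof. unfold Nmod. apply lt_0_INR. lia. Qed.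

Lemma Nmod_IZR q : Nmod q = IZR (2 * Z.of_nat q + 1).
Proof. unfold Nmod. rewrite INR_IZR_INZ. f_equal. lia. Qed.

Definition Csum q j := lsum (zrange q) (fun k => cos (2 * PI * IZR k * IZR j / Nmod q)).

Lemma C_zero q j : j <> 0%Z -> (Z.abs j <= 2 * Z.of_nat q)%Z -> Csum q j = 0.
Proof. intros Hj Hb. unfold Csum.
 set (x := 2 * PI * IZR j / Nmod q).
 assert (HN := Nmod_pos q).
 rewrite (lsum_ext _ _ (fun k => cos (IZR k * x))) by (intros; unfold x; f_equal; field; lra).
 assert (Hs : sin (x/2) <> 0).
 { intros H. apply sin_eq_0_0 in H. destruct H as [k Hk]. unfold x in Hk.
   assert (IZR j = IZR (k * (2 * Z.of_nat q + 1))).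
   { rewrite mult_IZR, <- Nmod_IZR. apply (Rmult_eq_reg_r (PI / Nmod q)).
     - replace (IZR k * Nmod q * (PI / Nmod q)) with (IZR k * PI) by (field; lra). rewrite <- Hk. field. lra.
     - assert (PI > 0) by apply PI_RGT_0. apply Rgt_not_eq. apply Rdiv_lt_0_compat; lra. }
   apply eq_IZR in H. subst j. assert (k <> 0%Z) by (intro; subst; lia). destruct (Z.le_gt_cases 1 k); [rewrite Z.abs_eq in Hb by nia|rewrite Z.abs_neq in Hb by nia]; nia. }
 apply (Rmult_eq_reg_l (2 * sin (x/2))); [|lra].
 rewrite <- lsum_scal. unfold zrange. rewrite seq_sum.
 replace ((INR (0 + (2 * q + 1)) - INR q - / 2) * x) with (IZR j * PI).
 2:{ unfold x. rewrite Nat.add_0_l. unfold Nmod. rewrite plus_INR, mult_INR. simpl INR. field.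
     assert (0 <= INR q) by apply pos_INR. lra. }
 replace ((INR 0 - INR q - / 2) * x) with (- (IZR j * PI)).
 2:{ unfold x. unfold Nmod. rewrite plus_INR, mult_INR. simpl INR. field.
     assert (0 <= INR q) by apply pos_INR. lra. }
 rewrite sin_neg, sin_eq_0_1 by (exists j; reflexivity). ring. Qed.

Lemma C_0 q : Csum q 0 = Nmod q.
Proof. unfold Csum. rewrite (lsum_ext _ _ (fun _ => 1)).
 - rewrite lsum_const1, zrange_len. reflexivity.
 - intros. simpl IZR. rewrite Rmult_0_r. unfold Rdiv. rewrite Rmult_0_l. apply cos_0. Qed.

Lemma cos_prod q k n m :
  cos (2 * PI * IZR k * IZR n / Nmod q) * cos (2 * PI * IZR k * IZR m / Nmod q) =
  / 2 * cos (2 * PI * IZR k * IZR (n + m) / Nmod q) + / 2 * cos (2 * PI * IZR k * IZR (n - m) / Nmod q).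
Proof. rewrite plus_IZR, minus_IZR.
 set (a := 2 * PI * IZR k * IZR n / Nmod q). set (b := 2 * PI * IZR k * IZR m / Nmod q).
 assert (HN := Nmod_pos q).
 replace (2 * PI * IZR k * (IZR n + IZR m) / Nmod q) with (a + b) by (unfold a, b; field; lra).
 replace (2 * PI * IZR k * (IZR n - IZR m) / Nmod q) with (a - b) by (unfold a, b; field; lra).
 rewrite cos_plus, cos_minus. field. Qed.

Lemma Ck q j : (Z.abs j <= 2 * Z.of_nat q)%Z -> Csum q j = if Z.eq_dec j 0 then Nmod q else 0.
Proof. intros H. destruct (Z.eq_dec j 0) as [->|Hj]. apply C_0. apply C_zero; auto. Qed.

Lemma inversion q f m : in_range q m -> (forall n, in_range q n -> f (- n)%Z = f n) ->
  lsum (zrange q) (fun k => dft_re q f k * cos (2 * PI * IZR k * IZR m / Nmod q)) = sqrt (Nmod q) * f m.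
Proof. intros Hm Hev. assert (HN := Nmod_pos q).
 unfold dft_re, sumZ. fold (lsum (zrange q)).
 transitivity (/ sqrt (Nmod q) * lsum (zrange q) (fun n => f n * (/2 * Csum q (n + m) + /2 * Csum q (n - m)))).
 - rewrite <- lsum_scal.
   rewrite (lsum_ext _ _ (fun k => / sqrt (Nmod q) * lsum (zrange q) (fun n => f n * (cos (2 * PI * IZR k * IZR n / Nmod q) * cos (2 * PI * IZR k * IZR m / Nmod q))))).
   2:{ intros k _. rewrite Rmult_assoc. f_equal. rewrite Rmult_comm. unfold lsum at 1. fold (lsum (zrange q) (fun n => f n * cos (2 * PI * IZR k * IZR n / Nmod q))). rewrite <- lsum_scal. apply lsum_ext. intros; ring. }
   rewrite lsum_scal, lsum_swap, lsum_scal. f_equal. apply lsum_ext. intros n _.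
   rewrite lsum_scal. f_equal. unfold Csum. rewrite <- !lsum_scal, <- lsum_plus. apply lsum_ext. intros k _.
   rewrite cos_prod. ring.
 - assert (Hin : forall n, In n (zrange q) -> (Z.abs (n + m) <= 2 * Z.of_nat q)%Z /\ (Z.abs (n - m) <= 2 * Z.of_nat q)%Z).
   { intros n Hn. apply in_zrange in Hn. unfold in_range in *. lia. }
   rewrite (lsum_ext _ _ (fun n => (f n * (/2 * (if Z.eq_dec (n + m) 0 then Nmod q else 0))) + (f n * (/2 * (if Z.eq_dec (n - m) 0 then Nmod q else 0))))).
   2:{ intros n Hn. destruct (Hin n Hn). rewrite !Ck by auto. ring. }
   rewrite lsum_plus.
   rewrite (lsum_delta _ (- m)%Z), (lsum_delta _ m).
   + destruct (Z.eq_dec (- m + m) 0); [|lia]. destruct (Z.eq_dec (m - m) 0); [|lia].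
     rewrite Hev by auto. rewrite <- (sqrt_sqrt (Nmod q)) at 2 3 by lra.
     assert (0 < sqrt (Nmod q)) by (apply sqrt_lt_R0; lra). field. lra.
   + apply zrange_nodup.
   + apply in_zrange; auto.
   + intros x _ Hx. destruct (Z.eq_dec (x - m) 0); [lia|ring].
   + apply zrange_nodup.
   + apply in_zrange; unfold in_range in *; lia.
   + intros x _ Hx. destruct (Z.eq_dec (x + m) 0); [lia|ring].
Qed.

Lemma cos0arg q k : cos (2 * PI * IZR k * IZR 0 / Nmod q) = 1.
Proof. simpl IZR. rewrite Rmult_0_r. unfold Rdiv. rewrite Rmult_0_l. apply cos_0. Qed.

Theorem mainTheorem15 (s : R) (q : nat) (f : Z -> R) :
  (s = 1 \/ s = -1) ->
  (1 <= q)%nat ->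
  (exists n, in_range q n /\ f n <> 0) ->
  (forall n, in_range q n -> f (- n)%Z = f n) ->
  s * f 0%Z <= 0 ->
  dft_re q f 0%Z <= 0 ->
  INR (count_neg q f * count_neg q (fun k => s * dft_re q f k)) >= INR (2 * q + 1) / 16.
Proof.
 intros Hs Hq [n0 [Hn0 Hf0]] Hev Hsf HF0.
 assert (HN := Nmod_pos q).
 assert (Hsq : 0 < sqrt (Nmod q)) by (apply sqrt_lt_R0; lra).
 assert (Hss : sqrt (Nmod q) * sqrt (Nmod q) = Nmod q) by (apply sqrt_sqrt; lra).
 set (r := / sqrt (Nmod q)).
 assert (Hr : 0 < r) by (apply Rinv_0_lt_compat; auto).
 set (F := dft_re q f).
 set (Sf := lsum (zrange q) (fun n => Rabs (f n))).
 set (SF := lsum (zrange q) (fun k => Rabs (F k))).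
 set (a := count_neg q f). set (b := count_neg q (fun k => s * F k)).
 assert (H1 : forall k, Rabs (F k) <= r * Sf).
 { intros k. unfold F, dft_re, sumZ. fold (lsum (zrange q) (fun n => f n * cos (2 * PI * IZR k * IZR n / Nmod q))).
   fold r. rewrite Rabs_mult, (Rabs_right r) by lra. apply Rmult_le_compat_l; [lra|].
   eapply Rle_trans; [apply lsum_abs|]. apply lsum_le. intros n _.
   rewrite Rabs_mult. assert (Rabs (cos (2 * PI * IZR k * IZR n / Nmod q)) <= 1) by apply Rabs_le, COS_bound.
   assert (0 <= Rabs (f n)) by apply Rabs_pos. nra. }
 assert (H2 : forall m, In m (zrange q) -> Rabs (f m) <= r * SF).
 { intros m Hm. apply in_zrange in Hm.
   assert (E := inversion q f m Hm Hev).
   replace (f m) with (r * lsum (zrange q) (fun k => dft_re q f k * cos (2 * PI * IZR k * IZR m / Nmod q))).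
   2:{ rewrite E. unfold r. field. lra. }
   rewrite Rabs_mult, (Rabs_right r) by lra. apply Rmult_le_compat_l; [lra|].
   eapply Rle_trans; [apply lsum_abs|]. apply lsum_le. intros k _.
   rewrite Rabs_mult. assert (Rabs (cos (2 * PI * IZR k * IZR m / Nmod q)) <= 1) by apply Rabs_le, COS_bound.
   assert (0 <= Rabs (F k)) by apply Rabs_pos. unfold F in *. nra. }
 assert (H3 : lsum (zrange q) f <= 0).
 { unfold dft_re, sumZ in HF0. fold (lsum (zrange q) (fun n => f n * cos (2 * PI * IZR 0 * IZR n / Nmod q))) in HF0.
   rewrite (lsum_ext _ _ f) in HF0.
   2:{ intros n _. replace (2 * PI * IZR 0 * IZR n / Nmod q) with (2 * PI * IZR n * IZR 0 / Nmod q) by (simpl; field; lra).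
       rewrite cos0arg. ring. }
   fold r in HF0. nra. }
 assert (H4 : lsum (zrange q) (fun k => s * F k) <= 0).
 { assert (E := inversion q f 0 ltac:(unfold in_range; lia) Hev).
   rewrite (lsum_ext _ _ (fun k => dft_re q f k)) in E by (intros; rewrite cos0arg; ring).
   rewrite lsum_scal. change (lsum (zrange q) F) with (lsum (zrange q) (fun k => dft_re q f k)). rewrite E. destruct Hs as [-> | ->]; nra. }
 assert (H5 : Sf <= 2 * INR a * (r * SF)).
 { assert (X := lsum_neg (zrange q) f (r * SF) H2). unfold a, count_neg. fold Sf in X. lra. }
 assert (Has : Rabs s = 1). { destruct Hs as [-> | ->]; unfold Rabs; destruct Rcase_abs; lra. }
 assert (H6 : SF <= 2 * INR b * (r * Sf)).
 { assert (X := lsum_neg (zrange q) (fun k => s * F k) (r * Sf)).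
   rewrite (lsum_ext _ _ (fun k => Rabs (F k))) in X.
   2:{ intros k _. rewrite Rabs_mult. rewrite Has. ring. }
   unfold b, count_neg. fold SF in X.
   assert (X' : SF <= lsum (zrange q) (fun k => s * F k) + 2 * INR (length (filter (fun n => if Rlt_dec (s * F n) 0 then true else false) (zrange q))) * (r * Sf)).
   { apply X. intros k _. rewrite Rabs_mult. rewrite Has, Rmult_1_l; auto. }
   lra. }
 assert (HSf : 0 < Sf).
 { assert (Rabs (f n0) <= Sf). { apply (lsum_ge _ _ (fun n => Rabs (f n))). apply in_zrange; auto. intros; apply Rabs_pos. }
   assert (0 < Rabs (f n0)) by (apply Rabs_pos_lt; auto). lra. }
 assert (HSF : 0 <= SF).
 { assert (0 <= Rabs (F 0%Z)) by apply Rabs_pos. assert (Rabs (F 0%Z) <= SF). { apply (lsum_ge _ _ (fun k => Rabs (F k))). apply in_zrange; unfold in_range; lia. intros; apply Rabs_pos. } lra. }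
 assert (Ha : 0 <= INR a) by apply pos_INR. assert (Hb : 0 <= INR b) by apply pos_INR.
 assert (Hrr : r * r * Nmod q = 1). { unfold r. set (t := sqrt (Nmod q)) in *. rewrite <- Hss. field. lra. }
 assert (H7 : Sf <= 4 * INR a * INR b * (r * r) * Sf).
 { eapply Rle_trans; [apply H5|]. assert (0 <= 2 * INR a * r) by nra.
   replace (4 * INR a * INR b * (r * r) * Sf) with (2 * INR a * r * (2 * INR b * (r * Sf))) by ring. nra. }
 assert (H8 : 1 <= 4 * INR a * INR b * (r * r)).
 { apply (Rmult_le_reg_r Sf); auto. lra. }
 assert (H9 : Nmod q <= 4 * INR a * INR b). { nra. }
 rewrite mult_INR. fold (Nmod q). nra.
Qed.
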